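(* Let $q$ be a prime power, $m>3$, and $n=q^m-1$. For an integer design distance $d\ge 2$, the primitive narrow-sense bicyclic hyperbolic code $\mathscr{H}(n\times n,q;d)$ over $\mathbb{F}_q$ contains its Euclidean dual if and only if $d\le\delta$, where $$\delta=\begin{cases}(q^m-1)-2(q^{m/2}-1)=(q^{m/2}-1)^2 & m \text{ even},\\ (q^m-1)-q^{(m-1)/2} & m\text{ odd}.\end{cases}$$
   Context: Bicyclic codes: linear subspaces of $\mathbb{F}_q^{n\times n}$ closed under cyclic shifts of rows and columns, identified with ideals of $\mathbb{F}_q[X,Y]/\langle X^n-1,Y^n-1\rangle$ via $c\mapsto c(X,Y)=\sum c_{i,j}X^iY^j$. Let $\alpha$ be a primitive $n$-th root of unity in $\mathbb{F}_{q^m}$. The $q$-ary cyclotomic coset of $(x,y)$ is $\mathrm{Coset}_{(x,y)}=\{(xq^k\bmod n, yq^k\bmod n):k\ge0\}$. The primitive narrow-sense bicyclic hyperbolic code $\mathscr{H}(n\times n,q;d)$ with design distance $d$ is the set of all $c\in\mathbb{F}_q^{n\times n}$ with $c(\alpha^x,\alpha^y)=0$ for all $(x,y)\in Z=\bigcup_{(x,y)\in Z_{des}}\mathrm{Coset}_{(x,y)}$, where the designed set is $Z_{des}=\{(x\bmod n,\ y\bmod n): 1\le x,y\le n,\ xy<d\}$. The Euclidean dual of $C$ is $C^\perp=\{u\in\mathbb{F}_q^{n\times n}:\sum_{i,j}u_{i,j}v_{i,j}=0\ \forall v\in C\}$. *)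

(* Defs.v *)
From HB Require Import structures.
From mathcomp Require Import all_boot all_order all_algebra all_field.
Set Implicit Arguments. Unset Strict Implicit. Unset Printing Implicit Defensive.
Import GRing.Theory.
Local Open Scope ring_scope.

(* (a,b) lies in Z = union of the q-cyclotomic cosets of the designed set
   Z_des = {(x mod n, y mod n) : 1 <= x,y <= n, x*y < d}. *)
Definition in_zero_set (n q d a b : nat) : Prop :=
  exists x y k : nat,
    [/\ (1 <= x <= n)%N, (1 <= y <= n)%N, (x * y < d)%N,
        a = ((x %% n) * q ^ k) %% n & b = ((y %% n) * q ^ k) %% n]%N.

Definition biv_eval (F : fieldType) (L : fieldExtType F) (n : nat)
  (c : 'M[F]_n) (a b : L) : L :=
  \sum_(i < n) \sum_(j < n) (c i j)%:A * a ^+ i * b ^+ j.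

Definition hyp_code (F : fieldType) (L : fieldExtType F) (n q d : nat)
  (alpha : L) (c : 'M[F]_n) : Prop :=
  forall a b : nat, in_zero_set n q d a b ->
    biv_eval c (alpha ^+ a) (alpha ^+ b) = 0.

Definition euclid_dual (F : fieldType) (n : nat) (C : 'M[F]_n -> Prop)
  (u : 'M[F]_n) : Prop :=
  forall v, C v -> \sum_(i < n) \sum_(j < n) u i j * v i j = 0.

Definition dual_containing (F : fieldType) (n : nat) (C : 'M[F]_n -> Prop) : Prop :=
  forall u, euclid_dual C u -> C u.

Definition hyp_delta (q m : nat) : nat :=
  if odd m then (q ^ m - 1 - q ^ ((m - 1) %/ 2))%N
  else ((q ^ (m %/ 2) - 1) ^ 2)%N.

Arguments hyp_code {F L} n q d alpha c.
Arguments dual_containing {F} n C.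
Arguments euclid_dual {F} n C u.

(* Main.v *)
From Stdlib Require Import ZArith Lia.
Require Import Defs.
From HB Require Import structures.
From mathcomp Require Import all_boot all_order all_algebra all_field.
From mathcomp Require Import zify ring.
Import GRing.Theory.

Module ZL.
Local Open Scope Z_scope.
Definition parity_ok (n T d : Z) :=
  (T*T = n+1 /\ d = (T-1)^2) \/ (2*T*T <= n+1 /\ d = n - T).

Lemma KI_odd_aux M T : 4 <= T -> 2*T*T <= M ->
  (M-T)*(M-T-1) + (T-1)*T*(M-T-2) * T <= (M-T)*(T-1)*(M-1).
Proof.
intros.
assert (0 <= (T-1)*(M-T-2)*(M-2*T*T)) by (apply Z.mul_nonneg_nonneg; nia).
assert (0 <= M*(M-T)*(T-3)) by (apply Z.mul_nonneg_nonneg; nia).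
assert (0 <= M*(T-1)) by nia. nia.
Qed.

Lemma KI (n A B T d : Z) : A*B = n+1 -> 2 <= B -> B <= T -> 4 <= T ->
  (B = T \/ 2*B <= T) -> parity_ok n T d ->
  (A-1)*(n - T) + (B-1)*B*(d-1) <= (B-1)*(A-1)*n.
Proof.
intros HAB HB2 HBT HT4 HBT' Hp.
assert (HdT: d + T <= n) by (destruct Hp as [[? ?]|[? ?]]; nia).
assert (Hd1: 1 <= d) by (destruct Hp as [[? ?]|[? ?]]; nia).
destruct (Z.eq_dec B 2) as [->|HB2'].
{ nia. }
destruct HBT' as [->|HBT'].
- destruct Hp as [[HT Hd]|[HT Hd]].
  + assert (A = T).
    { assert ((A - T)*T = 0) by nia. apply Z.mul_eq_0 in H. lia. }
    subst. nia.
  + subst d.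
    apply (Z.mul_le_mono_pos_l _ _ T); [lia|].
    rewrite Z.mul_add_distr_l.
    replace (T * ((A - 1) * (n - T))) with ((n+1-T)*(n-T)) by nia.
    replace (T * ((T - 1) * (A - 1) * n)) with ((n+1-T)*(T-1)*n) by nia.
    pose proof (KI_odd_aux (n+1) T HT4 HT).
    replace (n+1-T-1) with (n-T) in H by lia.
    replace (n+1-T-2) with (n-T-1) in H by lia.
    replace (n+1-1) with n in H by lia. nia.
-
  assert (HB3 : 3 <= B) by lia.
  assert (HTT : T*T <= n+1) by (destruct Hp as [[? ?]|[? ?]]; nia).
  assert (HA : B*(T+1) <= n+1) by nia.
  assert (HA1 : T+1 <= A) by nia.
  assert (H1 : (B-1)*B <= (A-1)*(B-2)) by nia.
  assert (H2 : (B-1)*B*(d-1) <= (A-1)*(B-2)*n).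
  { apply Z.le_trans with ((A-1)*(B-2)*(d-1)). apply Z.mul_le_mono_nonneg_r; lia.
    apply Z.mul_le_mono_nonneg_l; nia. }
  nia.
Qed.


Lemma LL (n A B T d x y : Z) : A*B = n+1 -> 2 <= B -> B <= T -> 4 <= T ->
  (B = T \/ 2*B <= T) -> parity_ok n T d ->
  1 <= x <= A-1 -> 1 <= y <= A-1 -> x*y <= d-1 ->
  n - T <= (n - B*x)*(n - B*y).
Proof.
intros HAB HB2 HBT HT4 HBT' Hp Hx Hy Hxy.
pose proof (KI n A B T d HAB HB2 HBT HT4 HBT' Hp) as K.
set (s := A - x). set (r := A - y).
assert (Hs : 1 <= s) by (unfold s; lia). assert (Hr : 1 <= r) by (unfold r; lia).
assert (E1 : n - B*x = s*B - 1) by (unfold s; rewrite Z.mul_sub_distr_r; lia).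
assert (E2 : n - B*y = r*B - 1) by (unfold r; rewrite Z.mul_sub_distr_r; lia).
rewrite E1 E2.
assert (H0 : 0 <= (s-1)*(r-1)) by (apply Z.mul_nonneg_nonneg; lia).
assert (H1 : s + r <= s*r + 1) by lia.
assert (H0' : 0 <= B*((s-1)*(r-1))) by (apply Z.mul_nonneg_nonneg; lia).
assert (H2 : (B-1)*(s*r*B - 1) <= (s*B-1)*(r*B-1)) by lia.
assert (Ex : x = A - s) by (unfold s; lia).
assert (Ey : y = A - r) by (unfold r; lia).
assert (H3 : A*A - A - d + 1 <= (A-1)*(s*r)).
{ assert (Hp2 : (A-s)*(A-r) <= d - 1) by (rewrite -Ex -Ey; lia).
  assert (A*(s+r) <= A*(s*r+1)) by (apply Z.mul_le_mono_nonneg_l; lia).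
  lia. }
assert (HA2 : 2 <= A) by lia.
assert (H4 : (B-1)*((A-1)*n - B*(d-1)) <= (A-1)*((B-1)*(s*r*B - 1))).
{ assert (Ee : B*(A*A - A) = (A-1)*(n+1)).
  { replace (B*(A*A-A)) with ((A*B)*(A-1)) by ring. rewrite HAB. ring. }
  assert (B*(A*A - A - d + 1) <= B*((A-1)*(s*r))) by (apply Z.mul_le_mono_nonneg_l; lia).
  assert (Hq : (B-1)*((A-1)*n - B*(d-1)) <= (B-1)*(B*((A-1)*(s*r)) - (A-1)))
    by (apply Z.mul_le_mono_nonneg_l; lia).
  lia. }
assert (H5' : (A-1)*((B-1)*(s*r*B - 1)) <= (A-1)*((s*B-1)*(r*B-1)))
  by (apply Z.mul_le_mono_nonneg_l; lia).
assert (H5 : (A-1)*(n-T) <= (A-1)*((s*B-1)*(r*B-1))) by lia.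
apply Z.mul_le_mono_pos_l in H5; lia.
Qed.

Lemma LL1 (n T d x y : Z) : 4 <= T -> d + T <= n ->
  1 <= x <= n-1 -> 1 <= y <= n-1 -> x*y <= d-1 ->
  n - T <= (n - x)*(n - y).
Proof.
intros HT Hd Hx Hy Hxy.
assert (H1 : 0 <= (n-1-x)*(n-1-y)) by nia.
assert (H2 : (n-1)*(n-1) < (n-1)*((n-x)*(n-y))) by nia.
assert (H3 : n - 1 < (n-x)*(n-y)).
{ apply (Z.mul_lt_mono_pos_l (n-1)); nia. }
lia.
Qed.


Lemma LR (n A B T d x v : Z) : A*B = n+1 -> 2 <= B -> B <= T -> 4 <= T ->
  (B = T \/ 2*B <= T) -> (A = B \/ 2*B <= A) -> n+1 <= A*A -> parity_ok n T d ->
  1 <= x <= A-1 -> 1 <= v <= B-1 -> x*(n - A*v) <= d-1 ->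
  n - T <= (n - B*x)*v.
Proof.
intros HAB HB2 HBT HT4 HBT' HAB' HAA Hp Hx Hv HP.
assert (HdT: d + T <= n) by (destruct Hp as [[? ?]|[? ?]]; nia).
assert (HTT : T*T <= n+1) by (destruct Hp as [[? ?]|[? ?]]; nia).
assert (HA1 : 1 <= A) by nia.
destruct (Z.eq_dec x 1) as [->|Hx1].
{ assert (n - B <= (n - B)*v) by (rewrite -{1}(Z.mul_1_r (n-B)); apply Z.mul_le_mono_nonneg_l; nia). lia. }
destruct (Z.eq_dec v (B-1)) as [->|Hv1].
{ pose proof (KI n A B T d HAB HB2 HBT HT4 HBT' Hp) as K.
  assert (E : n - A*(B-1) = A - 1) by lia. rewrite E in HP.
  assert (HA2 : 2 <= A) by lia.
  assert (H5 : B*(x*(A-1)) <= B*(d-1)) by (apply Z.mul_le_mono_nonneg_l; lia).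
  assert (H6 : (A-1)*((n - B*x)*(B-1)) = (B-1)*((A-1)*n - B*(x*(A-1)))) by ring.
  assert (H7 : (B-1)*((A-1)*n - B*(d-1)) <= (B-1)*((A-1)*n - B*(x*(A-1)))) by (apply Z.mul_le_mono_nonneg_l; lia).
  assert (H4 : (A-1)*(n-T) <= (A-1)*((n - B*x)*(B-1))) by lia.
  apply Z.mul_le_mono_pos_l in H4; lia. }
assert (HB3 : 3 <= B) by lia.
destruct (Z.eq_dec v 1) as [->|Hv2].
{ exfalso.
  assert (H1 : 2*(n - A*1) <= x*(n-A*1)) by (apply Z.mul_le_mono_nonneg_r; nia).
  assert (H2 : 3*A <= A*B) by nia. lia. }
assert (E : 2*A - 1 <= n - A*v).
{ assert (A*v <= A*(B-2)) by (apply Z.mul_le_mono_nonneg_l; lia). lia. }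
assert (H1 : x*(2*A-1) <= d-1).
{ apply Z.le_trans with (x*(n - A*v)); [apply Z.mul_le_mono_nonneg_l; lia|lia]. }
assert (H2 : 2*B*(d-1) <= (n+T)*(2*A-1)).
{ destruct HAB' as [HAB'|HAB'].
  - subst A. assert (B = T).
    { destruct (Z.le_gt_cases T B); [lia|].
      assert ((B+1)*(B+1) <= T*T) by (apply Z.mul_le_mono_nonneg; lia). lia. }
    subst B.
    assert (2*T*(d-1) <= 2*T*(n-T-1)) by (apply Z.mul_le_mono_nonneg_l; lia).
    nia.
  - assert (2*B*(d-1) <= 2*B*n) by (apply Z.mul_le_mono_nonneg_l; lia).
    assert (2*B*n <= n*(2*A-1)) by nia.
    assert (n*(2*A-1) <= (n+T)*(2*A-1)) by (apply Z.mul_le_mono_nonneg_r; lia).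
    lia. }
assert (H3 : 2*B*x <= n+T).
{ assert (2*B*x*(2*A-1) <= (n+T)*(2*A-1)).
  { assert (2*B*(x*(2*A-1)) <= 2*B*(d-1)) by (apply Z.mul_le_mono_nonneg_l; lia). lia. }
  apply Z.mul_le_mono_pos_r in H; lia. }
assert (B*x <= B*(A-1)) by (apply Z.mul_le_mono_nonneg_l; lia).
assert (2*(n - B*x) <= v*(n - B*x)) by (apply Z.mul_le_mono_nonneg_r; lia).
lia.
Qed.

Lemma LM (n A B T d x : Z) : A*B = n+1 -> 2 <= B -> B <= T -> 4 <= T ->
  (B = T \/ 2*B <= T) -> parity_ok n T d ->
  1 <= x -> A*x <= d-1 ->
  n - T <= B*(n - B*x).
Proof.
intros HAB HB2 HBT HT4 HBT' Hp Hx HP.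
assert (HdT: d + T <= n) by (destruct Hp as [[? ?]|[? ?]]; nia).
assert (Hd1: 1 <= d) by (destruct Hp as [[? ?]|[? ?]]; nia).
assert (HTT : T*T <= n+1) by (destruct Hp as [[? ?]|[? ?]]; nia).
assert (HA : 1 <= A) by nia.
assert (H1 : A*(B*(n - B*x)) >= (n+1)*n - B*B*(d-1)).
{ assert (B*B*(A*x) <= B*B*(d-1)) by (apply Z.mul_le_mono_nonneg_l; nia).
  assert (A*(B*(n - B*x)) = (A*B)*n - B*B*(A*x)) by ring. rewrite HAB in H0. lia. }
assert (H2 : B*B*(d-1) <= n*A*(B-1) + A*T).
{ destruct HBT' as [->|HBT'].
  - destruct Hp as [[HT Hd]|[HT Hd]].
    + assert (A = T) by (assert (Hz : (A - T)*T = 0) by nia; apply Z.mul_eq_0 in Hz; lia).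
      subst. nia.
    + assert (2*(T*T*(d-1)) <= (n+1)*(d-1)) by (rewrite Z.mul_assoc; apply Z.mul_le_mono_nonneg_r; lia).
      assert (E : n*A*(T-1) = n*(A*T) - n*A) by ring. rewrite HAB in E.
      assert (n*(2*A) <= n*(n+1)) by (apply Z.mul_le_mono_nonneg_l; nia).
      assert ((n+1)*(d-1) <= (n+1)*n) by (apply Z.mul_le_mono_nonneg_l; lia).
      lia.
  - assert (4*(B*B) <= n+1) by nia.
    assert (4*(B*B*(d-1)) <= (n+1)*(d-1)) by (rewrite Z.mul_assoc; apply Z.mul_le_mono_nonneg_r; lia).
    assert (E : n*A*(B-1) = n*(A*B) - n*A) by ring. rewrite HAB in E.
    assert (n*(2*A) <= n*(n+1)) by (apply Z.mul_le_mono_nonneg_l; nia).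
    assert ((n+1)*(d-1) <= (n+1)*n) by (apply Z.mul_le_mono_nonneg_l; lia).
    lia. }
assert (H3 : A*(n-T) <= A*(B*(n - B*x))) by nia.
apply Z.mul_le_mono_pos_l in H3; lia.
Qed.


Lemma mult_n_eq (n s k : Z) : 1 <= n -> 0 < s -> s < 2*n -> s = k*n -> s = n.
Proof.
intros Hn Hs1 Hs2 E. subst s.
destruct (Z.le_gt_cases k 0). { assert (k*n <= 0) by nia. lia. }
destruct (Z.le_gt_cases 2 k). { assert (2*n <= k*n) by nia. lia. }
assert (k = 1) by lia. subst; lia.
Qed.

Lemma core_half (n A B T d x y x' y' : Z) : A*B = n+1 -> 1 <= B -> B <= T -> 4 <= T ->
  (B = T \/ 2*B <= T) -> (A = B \/ 2*B <= A) -> n+1 <= A*A -> parity_ok n T d ->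
  1 <= x <= n-1 -> 1 <= y <= n-1 -> 1 <= x' <= n-1 -> 1 <= y' <= n-1 ->
  (exists k, B*x + x' = k*n) -> (exists k, B*y + y' = k*n) -> x*y <= d-1 -> x <= A-1 ->
  n - T <= x'*y'.
Proof.
intros HAB HB1 HBT HT4 HBT' HAB' HAA Hp Hx Hy Hx' Hy' [k1 Hk1] [k2 Hk2] HP HxA.
assert (HdT: d + T <= n) by (destruct Hp as [[? ?]|[? ?]]; nia).
assert (Hd1: 1 <= d) by (destruct Hp as [[? ?]|[? ?]]; nia).
assert (HBx : B*x <= B*(A-1)) by (apply Z.mul_le_mono_nonneg_l; lia).
assert (Ex' : x' = n - B*x).
{ assert (B*x + x' = n) by (apply (mult_n_eq n _ k1); lia). lia. }
subst x'.
destruct (Z.le_gt_cases y (A-1)) as [HyA|HyA].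
-
  assert (HBy : B*y <= B*(A-1)) by (apply Z.mul_le_mono_nonneg_l; lia).
  assert (Ey' : y' = n - B*y).
  { assert (B*y + y' = n) by (apply (mult_n_eq n _ k2); lia). lia. }
  subst y'.
  destruct (Z.eq_dec B 1) as [->|HB2].
  + replace (1*x) with x by ring. replace (1*y) with y by ring.
    apply (LL1 n T d); lia.
  + apply (LL n A B T d); try assumption; lia.
- assert (HB2 : 2 <= B).
  { destruct (Z.eq_dec B 1); [|lia]. subst B. lia. }
  destruct (Z.le_gt_cases y' (B-1)) as [Hy'B|Hy'B].
  +
    assert (HA1 : 1 <= A) by nia.
    assert (HAy : A*y' <= A*(B-1)) by (apply Z.mul_le_mono_nonneg_l; lia).
    assert (Ey : y = n - A*y').
    { assert (y + A*y' = n).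
      { apply (mult_n_eq n _ (A*k2 - y)); try lia.
        all: assert (A*(B*y+y') = A*(k2*n)) by (rewrite Hk2; ring).
        all: replace (A*(B*y+y')) with ((A*B)*y + A*y') in H by ring.
        all: rewrite HAB in H.
        all: replace ((A*k2 - y)*n) with (A*(k2*n) - y*n) by ring. all: lia. }
      lia. }
    rewrite Ey in HP.
    rewrite Z.mul_comm. 
    assert (n - T <= (n - B*x)*y') by (apply (LR n A B T d); try assumption; lia).
    lia.
  +
    assert (HAx : A*x <= d-1).
    { assert (x*A <= x*y) by (apply Z.mul_le_mono_nonneg_l; lia). lia. }
    assert (n - T <= B*(n - B*x)) by (apply (LM n A B T d); try assumption; lia).
    assert (B*(n-B*x) <= y'*(n - B*x)) by (apply Z.mul_le_mono_nonneg_r; lia).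
    lia.
Qed.

Lemma core_Z (n A B T d x y x' y' : Z) : A*B = n+1 -> 1 <= B -> B <= T -> 4 <= T ->
  (B = T \/ 2*B <= T) -> (A = B \/ 2*B <= A) -> n+1 <= A*A -> parity_ok n T d ->
  1 <= x <= n-1 -> 1 <= y <= n-1 -> 1 <= x' <= n-1 -> 1 <= y' <= n-1 ->
  (exists k, B*x + x' = k*n) -> (exists k, B*y + y' = k*n) -> x*y <= d-1 ->
  n - T <= x'*y'.
Proof.
intros. 
assert (HdT: d + T <= n) by (destruct H6 as [[? ?]|[? ?]]; nia).
destruct (Z.le_gt_cases x (A-1)).
- apply (core_half n A B T d x y); auto.
- destruct (Z.le_gt_cases y (A-1)).
  + rewrite Z.mul_comm. apply (core_half n A B T d y x); auto; lia.
  + exfalso. assert (A*A <= x*y) by (apply Z.mul_le_mono_nonneg; lia). lia.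
Qed.

End ZL.
Delimit Scope Z_scope with ZZ.
Set Implicit Arguments. Unset Strict Implicit. Unset Printing Implicit Defensive.

Lemma dvd_exZ (n e : nat) : (n %| e)%N -> exists k : Z, Z.of_nat e = (k * Z.of_nat n)%ZZ.
Proof. move=> /divnK H; exists (Z.of_nat (e %/ n)); lia. Qed.

Lemma core_abs (n A B T d x y x' y' : nat) :
  (A * B = n.+1)%N -> (1 <= B)%N -> (B <= T)%N -> (4 <= T)%N ->
  (B = T \/ 2 * B <= T)%N -> (A = B \/ 2 * B <= A)%N -> (n.+1 <= A * A)%N ->
  ((T * T = n.+1 /\ d = (T - 1) ^ 2) \/ (2 * T * T <= n.+1 /\ d = n - T))%N ->
  (0 < x < n)%N -> (0 < y < n)%N -> (0 < x' < n)%N -> (0 < y' < n)%N ->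
  (n %| x * B + x')%N -> (n %| y * B + y')%N -> (x * y < d)%N ->
  (n - T <= x' * y')%N.
Proof.
move=> AB B1 BT T4 BT' AB' AA par Hx Hy Hx' Hy' Hdx Hdy Hxy.
have [k1 Hk1] := dvd_exZ Hdx.
have [k2 Hk2] := dvd_exZ Hdy.
have TN : (T <= n)%N.
  have TT : (T * T <= n.+1)%N by case: par => [[H1 _]|[H1 _]]; lia.
  clear -TT T4; nia.
have dZ : (Z.of_nat d = Z.of_nat n - Z.of_nat T /\ 2 * Z.of_nat T * Z.of_nat T <= Z.of_nat n + 1)%ZZ \/
   (Z.of_nat T * Z.of_nat T = Z.of_nat n + 1 /\ Z.of_nat d = (Z.of_nat T - 1) ^ 2)%ZZ.
  case: par => [[H1 H2]|[H1 H2]]; [right|left]; last by clear -H1 H2 TN; lia.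
  split; first by clear -H1; lia.
  rewrite H2; have T1 : (1 <= T)%N by lia.
  rewrite expnS expn1 Z.pow_2_r; clear -T1; nia.
have := @ZL.core_Z (Z.of_nat n) (Z.of_nat A) (Z.of_nat B) (Z.of_nat T)
          (Z.of_nat d) (Z.of_nat x) (Z.of_nat y) (Z.of_nat x') (Z.of_nat y').
move=> /(_ ltac:(clear -AB; lia) ltac:(clear -B1; lia) ltac:(clear -BT; lia) ltac:(clear -T4; lia)).
move=> /(_ ltac:(clear -BT'; case: BT' => H; [left|right]; lia)).
move=> /(_ ltac:(clear -AB'; case: AB' => H; [left|right]; lia)).
move=> /(_ ltac:(clear -AA; lia)).
move=> /(_ ltac:(rewrite /ZL.parity_ok; clear -dZ; case: dZ => [[H1 H2]|[H1 H2]]; [right|left]; lia)).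
move=> /(_ ltac:(clear -Hx; lia) ltac:(clear -Hy; lia) ltac:(clear -Hx'; lia) ltac:(clear -Hy'; lia)).
move=> /(_ ltac:(exists k1; clear -Hk1; lia) ltac:(exists k2; clear -Hk2; lia)).
have dpos : (1 <= d)%N by lia.
move=> /(_ ltac:(clear -Hxy dpos; lia)).
clear -TN; lia.
Qed.

Lemma delta_par (q m n : nat) : (2 <= q)%N -> (3 < m)%N -> n = (q ^ m - 1)%N ->
  (4 <= q ^ m./2)%N /\ n.+1 = (q ^ m)%N /\
  (((q ^ m./2) * (q ^ m./2) = n.+1 /\ hyp_delta q m = (q ^ m./2 - 1) ^ 2 /\ ~~ odd m) \/
   (2 * (q ^ m./2) * (q ^ m./2) <= n.+1 /\ hyp_delta q m = n - q ^ m./2 /\ odd m))%N.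
Proof.
move=> q2 m3 Hn.
have qm0 : (0 < q ^ m)%N by rewrite expn_gt0; lia.
have nS : n.+1 = (q ^ m)%N by lia.
split.
  apply: (@leq_trans (2 ^ 2)) => //.
  apply: (@leq_trans (q ^ 2)); first by rewrite leq_exp2r.
  rewrite leq_exp2l //; rewrite -divn2; apply: (@leq_trans (4 %/ 2)) => //.
  by apply: leq_div2r; lia.
split => //.
rewrite /hyp_delta; case: (boolP (odd m)) => om.
- have Em : m = (m./2).*2.+1 by rewrite -{1}(odd_double_half m) om add1n.
  right; split; last split => //.
  + have H2 : (2 * (q ^ m./2 * q ^ m./2) <= q ^ (m./2).*2.+1)%N
      by rewrite -expnD addnn expnS leq_mul2r q2 orbT.
    by rewrite nS -mulnA; apply: (leq_trans H2); rewrite -Em.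
  + have -> : ((m - 1) %/ 2 = m./2)%N by rewrite {1}Em subn1 /= -muln2 mulnK.
    by rewrite Hn.
- left; split; last split => //.
  + rewrite nS -expnD addnn.
    by have := odd_double_half m; rewrite (negbTE om) add0n => ->.
  + by rewrite divn2.
Qed.

Lemma core_nat (q m j n x y x' y' : nat) : (2 <= q)%N -> (3 < m)%N -> n = (q ^ m - 1)%N ->
  (j.*2 <= m)%N -> (0 < x < n)%N -> (0 < y < n)%N -> (0 < x' < n)%N -> (0 < y' < n)%N ->
  (n %| x * q ^ j + x')%N -> (n %| y * q ^ j + y')%N -> (x * y < hyp_delta q m)%N ->
  (n - q ^ m./2 <= x' * y')%N.
Proof.
move=> q2 m3 Hn j2 Hx Hy Hx' Hy' Hdx Hdy Hxy.
have [T4 [nS par]] := delta_par q2 m3 Hn.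
set T := (q ^ m./2)%N in T4 par *. set B := (q ^ j)%N in Hdx Hdy *.
set A := (q ^ (m - j))%N.
have AB : (A * B = n.+1)%N by rewrite /A /B -expnD subnK ?nS //; clear -j2; lia.
have jh : (j <= m./2)%N by rewrite -(leq_double); clear -j2; lia.
have jmj : (j <= m - j)%N by clear -j2; lia.
have B1 : (1 <= B)%N by rewrite /B expn_gt0; lia.
have BT : (B <= T)%N by rewrite /B /T leq_exp2l //.
have BT' : B = T \/ (2 * B <= T)%N.
  case: (ltngtP j m./2) => [lt|gt|E]; [right|by move: gt; rewrite ltnNge jh|by left; rewrite /B E].
  rewrite /B /T; apply: (@leq_trans (q ^ j.+1)); first by rewrite expnS leq_mul2r q2 orbT.
  by rewrite leq_exp2l.
have AB' : A = B \/ (2 * B <= A)%N.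
  case: (ltngtP j (m - j)) => [lt|gt|E]; [right|by move: gt; rewrite ltnNge jmj|by left; rewrite /A /B -E].
  rewrite /A /B; apply: (@leq_trans (q ^ j.+1)); first by rewrite expnS leq_mul2r q2 orbT.
  by rewrite leq_exp2l.
have AA : (n.+1 <= A * A)%N.
  rewrite nS /A -expnD leq_exp2l //; clear -jmj; lia.
apply: (core_abs AB B1 BT T4 BT' AB' AA _ Hx Hy Hx' Hy' Hdx Hdy Hxy).
by case: par => [[H1 [H2 _]]|[H1 [H2 _]]]; [left|right].
Qed.

Local Open Scope ring_scope.

Lemma dvd_Zp (n e : nat) : (1 < n)%N -> (n %| e)%N = ((e%:R : 'Z_n) == 0)%R.
Proof. by move=> n1; rewrite /dvdn -val_eqE /= val_Zp_nat. Qed.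

Lemma Zp_qm (q m n : nat) : (1 < n)%N -> n.+1 = (q ^ m)%N -> ((q%:R : 'Z_n) ^+ m = 1)%R.
Proof.
move=> n1 nS; rewrite -natrX -nS -natr1.
by rewrite -(Zp_nat_mod n1 n) modnn add0r.
Qed.

Lemma Zp_qpow (q m n e : nat) : (1 < n)%N -> n.+1 = (q ^ m)%N ->
  ((q%:R : 'Z_n) ^+ e = (q%:R : 'Z_n) ^+ (e %% m))%R.
Proof.
move=> n1 nS; rewrite {1}(divn_eq e m) exprD mulnC exprM (Zp_qm n1 nS).
by rewrite expr1n mul1r.
Qed.

Lemma shift (q m n x x' k1 k2 k : nat) : (1 < n)%N -> n.+1 = (q ^ m)%N -> (0 < m)%N ->
  (n %| (x * q ^ k1) %% n * q ^ k + (x' * q ^ k2) %% n)%N ->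
  (n %| x * q ^ ((k1 + k + (m - 1) * k2) %% m) + x')%N.
Proof.
move=> n1 nS m0; rewrite !dvd_Zp // !natrD !natrM !Zp_nat_mod // !natrM !natrX.
rewrite -(Zp_qpow _ n1 nS).
set Q := (q%:R : 'Z_n); set X := (x%:R : 'Z_n); set X' := (x'%:R : 'Z_n).
move=> /eqP H; apply/eqP.
have E1 : (X' = X' * Q ^+ (m * k2))%R by rewrite exprM (Zp_qm n1 nS) expr1n mulr1.
have E2 : (m * k2 = k2 + (m - 1) * k2)%N by rewrite mulnBl mul1n subnKC // leq_pmull.
rewrite E1 E2 !exprD.
transitivity (Q ^+ ((m - 1) * k2) * (X * Q ^+ k1 * Q ^+ k + X' * Q ^+ k2))%R.
  ring.
by rewrite H mulr0.
Qed.

Lemma swapdv (q m n x x' j : nat) : (1 < n)%N -> n.+1 = (q ^ m)%N -> (j <= m)%N ->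
  (n %| x * q ^ j + x')%N -> (n %| x' * q ^ (m - j) + x)%N.
Proof.
move=> n1 nS jm; rewrite !dvd_Zp // !natrD !natrM !natrX.
set Q := (q%:R : 'Z_n); set X := (x%:R : 'Z_n); set X' := (x'%:R : 'Z_n).
move=> /eqP H; apply/eqP.
have E : X = X * Q ^+ m by rewrite (Zp_qm n1 nS) mulr1.
have Em : Q ^+ m = Q ^+ j * Q ^+ (m - j) by rewrite -exprD subnKC.
rewrite [Z in _ + Z]E Em.
transitivity (Q ^+ (m - j) * (X * Q ^+ j + X')); first ring.
by rewrite H mulr0.
Qed.

Definition BadN (q m n d : nat) := exists a b a' b' k, (k < m)%N /\ in_zero_set n q d a b /\
  in_zero_set n q d a' b' /\ (n %| a * q ^ k + a')%N /\ (n %| b * q ^ k + b')%N.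

Lemma NT_lower (q m n d : nat) : (2 <= q)%N -> (3 < m)%N -> n = (q ^ m - 1)%N ->
  BadN q m n d -> (hyp_delta q m < d)%N.
Proof.
move=> q2 m3 Hn [a [b [a' [b' [k [km [Z1 [Z2 [Ha Hb]]]]]]]]].
have [T4 [nS par]] := delta_par q2 m3 Hn.
set T := (q ^ m./2)%N in T4 par.
have dT : (hyp_delta q m <= n - T)%N.
  case: par => [[H1 [-> _]]|[_ [-> _]]] //.
  rewrite -/T; clear -T4 H1; nia.
have n1 : (1 < n)%N by case: par => [[H1 _]|[H1 _]]; clear -H1 T4; nia.
rewrite ltnNge; apply/negP => dd.
case: Z1 => x [y [k1 [/andP [x1 xn] /andP [y1 yn] xy Ea Eb]]].
case: Z2 => x' [y' [k2 [/andP [x1' xn'] /andP [y1' yn'] xy' Ea' Eb']]].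
have lt_n : forall u v, (1 <= v)%N -> (u * v < d)%N -> (u < n)%N.
  move=> u v v1 uv; have : (u <= u * v)%N by rewrite leq_pmulr.
  clear -uv dd dT T4; lia.
have lt_n' : forall u v, (1 <= u)%N -> (u * v < d)%N -> (v < n)%N.
  move=> u v u1 uv; have : (v <= u * v)%N by rewrite leq_pmull.
  clear -uv dd dT T4; lia.
have hx := lt_n _ _ y1 xy. have hy := lt_n' _ _ x1 xy.
have hx' := lt_n _ _ y1' xy'. have hy' := lt_n' _ _ x1' xy'.
rewrite (modn_small hx) in Ea; rewrite (modn_small hy) in Eb.
rewrite (modn_small hx') in Ea'; rewrite (modn_small hy') in Eb'.
subst a b a' b'.
have m0 : (0 < m)%N by clear -m3; lia.
have Hx := shift n1 nS m0 Ha.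
have Hy := shift n1 nS m0 Hb.
set j := ((k1 + k + (m - 1) * k2) %% m)%N in Hx Hy.
have jm : (j < m)%N by rewrite /j ltn_pmod.
case: (leqP j.*2 m) => hj.
- have := core_nat q2 m3 Hn hj (andb_true_intro (conj x1 hx)) (andb_true_intro (conj y1 hy)) (andb_true_intro (conj x1' hx')) (andb_true_intro (conj y1' hy')) Hx Hy
     ltac:(clear -xy dd; lia).
  rewrite -/T; clear -xy' dd dT; lia.
- have hj' : ((m - j).*2 <= m)%N by clear -hj jm; lia.
  have Hx2 := swapdv n1 nS (ltnW jm) Hx.
  have Hy2 := swapdv n1 nS (ltnW jm) Hy.
  have := core_nat q2 m3 Hn hj' (andb_true_intro (conj x1' hx')) (andb_true_intro (conj y1' hy')) (andb_true_intro (conj x1 hx)) (andb_true_intro (conj y1 hy)) Hx2 Hy2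
     ltac:(clear -xy' dd; lia).
  rewrite -/T; clear -xy dd dT; lia.
Qed.

Lemma izs_small (n q d x y : nat) : (0 < x < n)%N -> (0 < y < n)%N -> (x * y < d)%N ->
  in_zero_set n q d x y.
Proof.
move=> /andP [x0 xn] /andP [y0 yn] xy; exists x, y, 0%N.
rewrite expn0 !muln1 !modn_small //; split => //; apply/andP; split => //; exact: ltnW.
Qed.

Lemma NT_upper (q m n d : nat) : (2 <= q)%N -> (3 < m)%N -> n = (q ^ m - 1)%N ->
  (hyp_delta q m < d)%N -> BadN q m n d.
Proof.
move=> q2 m3 Hn dd.
have [T4 [nS par]] := delta_par q2 m3 Hn.
set h := m./2 in T4 par. set T := (q ^ h)%N in T4 par.
case: par => [[H1 [H2 _]]|[H1 [H2 om]]]; rewrite H2 in dd.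
-
  have hm : (h < m)%N by rewrite /h -divn2 ltn_Pdiv //; clear -m3; lia.
  exists (T - 1)%N, (T - 1)%N, (T - 1)%N, (T - 1)%N, h; split => //.
  have Tn : (0 < T - 1 < n)%N by apply/andP; split; clear -T4 H1; nia.
  have sq : ((T - 1) * (T - 1) < d)%N by move: dd; rewrite expnS expn1.
  split; first exact: izs_small.
  split; first exact: izs_small.
  have E : ((T - 1) * q ^ h + (T - 1) = n)%N by rewrite -/T; clear -T4 H1; nia.
  by rewrite E dvdnn.
-
  have Em : m = h.*2.+1 by rewrite /h -{1}(odd_double_half m) om add1n.
  have hm : (h.+1 < m)%N by rewrite Em; clear -m3 Em; lia.
  have qT : (q ^ h.+1 = q * T)%N by rewrite expnS.
  have nE : (n.+1 = q * T * T)%N by rewrite nS Em expnS -addnn expnD mulnA.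
  have qTn : (q * T < n)%N by clear -nE T4 q2; nia.
  exists 1%N, (n - T)%N, (n - q * T)%N, 1%N, h.+1; split => //.
  split.
    apply: izs_small.
    - by apply/andP; split; clear -nE T4 q2; nia.
    - by apply/andP; split; clear -nE T4 q2; nia.
    - by rewrite mul1n.
  split.
    apply: izs_small.
    - by apply/andP; split; clear -nE T4 q2; nia.
    - by apply/andP; split; clear -nE T4 q2; nia.
    - rewrite muln1; clear -dd qTn q2 T4; nia.
  rewrite qT; split.
  + rewrite mul1n subnKC ?dvdnn //; exact: ltnW.
  + apply/dvdnP; exists (q * T - 1)%N; clear -nE T4 q2; nia.
Qed.

Local Open Scope ring_scope.

Section Alg.
Variables (F : finFieldType) (L : fieldExtType F).
Local Notation q := #|F|.

Lemma pnat_q : [pchar L].-nat q.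
Proof.
have [p pr_p pFp] := finPcharP F.
have cardF : #|F| = (p ^ logn p #|F|)%N := card_pprimeChar pFp.
rewrite cardF pnatX.
apply/orP; left.
rewrite (eq_pnat _ (pchar_lalg L)) (eq_pnat _ (pcharf_eq pFp)).
exact: pnat_id.
Qed.

Lemma pnat_qk k : [pchar L].-nat (q ^ k)%N.
Proof. by rewrite pnatX pnat_q. Qed.

Lemma frobD k (y z : L) : (y + z) ^+ (q ^ k)%N = y ^+ (q ^ k)%N + z ^+ (q ^ k)%N.
Proof. exact: exprDn_pchar (pnat_qk k). Qed.

Lemma frob_sum k (I : Type) (r : seq I) (P : pred I) (f : I -> L) :
  (\sum_(i <- r | P i) f i) ^+ (q ^ k)%N = \sum_(i <- r | P i) (f i) ^+ (q ^ k)%N.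
Proof.
apply: (big_morph (fun y : L => y ^+ (q ^ k)%N)); first exact: frobD.
have q0 : (0 < q)%N by apply: ltnW; exact: finNzRing_gt1.
by rewrite expr0n expn_eq0 eqn0Ngt q0.
Qed.

Lemma expfq_k k (c : F) : c ^+ (q ^ k)%N = c.
Proof. by elim: k => [|k IH]; rewrite ?expr1 // expnSr exprM IH expf_card. Qed.

Lemma frob_alg k (c : F) : (c%:A : L) ^+ (q ^ k)%N = c%:A.
Proof. by rewrite exprZn expr1n expfq_k. Qed.

Lemma fermat_full (y : L) : y ^+ (q ^ \dim {:L})%N = y.
Proof. by apply/eqP; rewrite -(Fermat's_little_theorem {:L}%AS y) memvf. Qed.

Lemma fixed_alg (y : L) : y ^+ q = y -> exists c : F, y = c%:A.
Proof.
move=> Hy.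
have : y \in (1%AS : {aspace L}).
  by rewrite (Fermat's_little_theorem 1%AS y) dimv1 expn1 Hy.
by case/vlineP=> c ->; exists c.
Qed.


Lemma q_gt1 : (1 < q)%N.
Proof. exact: finNzRing_gt1. Qed.

Variables (m n : nat) (alpha : L).
Hypotheses (dimL : \dim {:L} = m) (Hn : n = (q ^ m - 1)%N)
  (prim : n.-primitive_root alpha) (m_gt1 : (1 < m)%N).

Definition Tr (y : L) : L := \sum_(k < m) y ^+ (q ^ k)%N.

Lemma Tr_frob y : Tr y ^+ q = Tr y.
Proof.
rewrite -[q in _ ^+ q]expn1 /Tr frob_sum.
have fm : y ^+ (q ^ m)%N = y by rewrite -dimL fermat_full.
case: m m_gt1 fm => // m' _ fm.
rewrite big_ord_recr big_ord_recl /=.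
under eq_bigr do rewrite -exprM -expnSr.
rewrite -exprM -expnSr fm expn0 expr1 addrC; congr (_ + _).
Qed.

Lemma Tr_alg y : exists c : F, Tr y = c%:A.
Proof. exact/fixed_alg/Tr_frob. Qed.

Definition trc (y : L) : F := odflt 0 [pick c : F | c%:A == Tr y].

Lemma trcE y : (trc y)%:A = Tr y.
Proof.
rewrite /trc; case: pickP => [c /eqP //|H].
by have [c Hc] := Tr_alg y; move: (H c); rewrite Hc eqxx.
Qed.

Lemma Tr_scale (c : F) y : Tr (c%:A * y) = c%:A * Tr y.
Proof.
by rewrite /Tr mulr_sumr; apply: eq_bigr => k _; rewrite exprMn frob_alg.
Qed.

Lemma Tr_sum (I : Type) (r : seq I) (P : pred I) (f : I -> L) :
  Tr (\sum_(i <- r | P i) f i) = \sum_(i <- r | P i) Tr (f i).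
Proof.
rewrite /Tr; under eq_bigr do rewrite frob_sum.
exact: exchange_big.
Qed.


Lemma qm_gt0 : (0 < q ^ m)%N.
Proof. by rewrite expn_gt0 (ltnW q_gt1). Qed.

Lemma nS : n.+1 = (q ^ m)%N.
Proof. by rewrite Hn subn1 prednK // qm_gt0. Qed.

Lemma n_gt0 : (0 < n)%N.
Proof.
rewrite -ltnS nS; apply: (@leq_trans (q ^ 1)); first by rewrite expn1 q_gt1.
by rewrite leq_exp2l ?q_gt1 // ltnW.
Qed.

Lemma natq0 : (q%:R : L) = 0.
Proof.
have [p pr_p pFp] := finPcharP F.
have pLp : p \in [pchar L] by rewrite (pchar_lalg L).
have cardF : #|F| = (p ^ logn p #|F|)%N := card_pprimeChar pFp.
have k0 : (0 < logn p #|F|)%N.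
  rewrite lt0n; apply/negP => /eqP k0; move: q_gt1; by rewrite cardF k0.
by rewrite cardF natrX (pcharf0 pLp) expr0n eqn0Ngt k0.
Qed.

Lemma natn : (n%:R : L) = -1.
Proof.
apply/eqP; rewrite -subr_eq0 opprK natr1 nS natrX natq0 expr0n.
by rewrite eqn0Ngt (ltn_trans _ m_gt1).
Qed.

Lemma geom e : \sum_(i < n) (alpha ^+ e) ^+ i = if (n %| e)%N then n%:R else 0.
Proof.
case: ifP => He.
  have -> : alpha ^+ e = 1 by apply/eqP; rewrite -(prim_order_dvd prim).
  by under eq_bigr do rewrite expr1n; rewrite sumr_const card_ord.
have Hb : alpha ^+ e - 1 != 0 by rewrite subr_eq0 -(prim_order_dvd prim) He.
have : (alpha ^+ e) ^+ n - 1 = 0 by rewrite exprAC (prim_expr_order prim) expr1n subrr.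
rewrite subrX1 => /eqP; rewrite mulf_eq0 (negbTE Hb) /= => /eqP //.
Qed.


Lemma nondeg (K : pred nat) k0 (w : L) : (k0 < m)%N -> K k0 -> w != 0 ->
  exists t, (t < n)%N /\ \sum_(k < m | K k) (alpha ^+ t * w) ^+ (q ^ k)%N != 0.
Proof.
move=> k0m Kk0 w0.
case: (boolP [exists t : 'I_n, \sum_(k < m | K k) (alpha ^+ t * w) ^+ (q ^ k)%N != 0]).
  by case/existsP => t Ht; exists t; split.
rewrite negb_exists => /forallP Hall.
pose P : {poly L} := \sum_(k < m | K k) 'X^(q ^ k)%N.
have P0 : P != 0.
  apply/eqP => /(congr1 (fun p : {poly L} => p`_(q ^ k0)%N)).
  rewrite coef0 coef_sum (bigD1 (Ordinal k0m)) //= coefXn eqxx big1 ?addr0.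
    by move/eqP; rewrite oner_eq0.
  move=> k /andP [_ Hk]; rewrite coefXn.
  case: eqP => // /(expnI q_gt1) E.
  by move: Hk; rewrite -val_eqE /= E eqxx.
pose rs := [seq alpha ^+ t * w | t <- iota 0 n].
have Hroots : all (root P) rs.
  apply/allP => x /mapP [t]; rewrite mem_iota add0n => /andP [_ tn] ->.
  move: (Hall (Ordinal tn)); rewrite negbK /= /root /P horner_sum => /eqP H.
  apply/eqP; apply: etrans H; apply: eq_bigr => k _; exact: hornerXn.
have Huniq : uniq rs.
  rewrite map_inj_in_uniq ?iota_uniq // => t s.
  rewrite !mem_iota !add0n => /andP [_ tn] /andP [_ sn] /(mulIf w0) /eqP.
  by rewrite (eq_prim_root_expr prim) !modn_small // => /eqP.
have := max_poly_roots P0 Hroots Huniq.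
rewrite size_map size_iota.
have HP : (size P <= (q ^ m.-1).+1)%N.
  apply: leq_trans (size_sum _ _ _) _.
  apply/bigmax_leqP => k _; rewrite size_polyXn ltnS leq_exp2l ?q_gt1 //.
  by rewrite -ltnS prednK // (ltn_trans _ m_gt1).
move=> Hlt; have := leq_trans Hlt HP.
rewrite ltnS -ltnS nS.
have -> : (q ^ m)%N = (q * q ^ m.-1)%N by rewrite -expnS prednK // (ltn_trans _ m_gt1).
have h2 : (2 <= q ^ m.-1)%N.
  apply: (@leq_trans (q ^ 1)); first by rewrite expn1 q_gt1.
  by rewrite leq_exp2l ?q_gt1 // -ltnS prednK // (ltn_trans _ m_gt1).
have h3 : (2 * q ^ m.-1 <= q * q ^ m.-1)%N by rewrite leq_mul2r q_gt1 orbT.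
move=> H; lia.
Qed.


Definition trmat (t a b : nat) : 'M[F]_n :=
  \matrix_(i, j) trc (alpha ^+ (t + a * i + b * j)%N).

Lemma alg_sum (I : Type) (r : seq I) (P : pred I) (f : I -> F) :
  ((\sum_(i <- r | P i) f i)%:A : L) = \sum_(i <- r | P i) (f i)%:A.
Proof. by rewrite scaler_suml. Qed.

Lemma alg_mul (c d : F) : ((c * d)%:A : L) = c%:A * d%:A.
Proof. by rewrite mulr_algl scalerA. Qed.

Lemma inner_trmat (u : 'M[F]_n) t a b :
  ((\sum_i \sum_j u i j * trmat t a b i j)%:A : L) =
  Tr (alpha ^+ t * biv_eval u (alpha ^+ a) (alpha ^+ b)).
Proof.
rewrite /biv_eval mulr_sumr Tr_sum alg_sum; apply: eq_bigr => i _.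
rewrite mulr_sumr Tr_sum alg_sum; apply: eq_bigr => j _.
rewrite alg_mul mxE trcE.
rewrite mulrCA -!mulrA Tr_scale; congr (_ * Tr _).
rewrite -!exprM -!exprD; congr (alpha ^+ _); lia.
Qed.

Lemma eval_trmat t a b a' b' :
  biv_eval (trmat t a b) (alpha ^+ a') (alpha ^+ b') =
  \sum_(k < m | (n %| a * q ^ k + a')%N && (n %| b * q ^ k + b')%N) (alpha ^+ t) ^+ (q ^ k)%N.
Proof.
rewrite /biv_eval.
have E : forall (i j : 'I_n), (trmat t a b i j)%:A * (alpha ^+ a') ^+ i * (alpha ^+ b') ^+ j =
   \sum_(k < m) (alpha ^+ t) ^+ (q ^ k)%N * (alpha ^+ (a * q ^ k + a')%N) ^+ i
        * (alpha ^+ (b * q ^ k + b')%N) ^+ j.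
  move=> i j; rewrite mxE trcE /Tr !mulr_suml; apply: eq_bigr => k _.
  rewrite -!exprM -!exprD; congr (alpha ^+ _); lia.
under eq_bigr do under eq_bigr do rewrite E.
under eq_bigr do rewrite exchange_big.
rewrite exchange_big [RHS]big_mkcond; apply: eq_bigr => k _.
under eq_bigr do rewrite -mulr_sumr.
rewrite -mulr_suml -mulr_sumr.
rewrite !geom; case: (n %| a * q ^ k + a')%N; case: (n %| b * q ^ k + b')%N => /=;
  rewrite ?natn ?mulr0 ?mul0r //; by rewrite -mulrA mulrNN !mulr1.
Qed.


Definition Bad (d : nat) := exists a b a' b' k, (k < m)%N /\ in_zero_set n q d a b /\
  in_zero_set n q d a' b' /\ (n %| a * q ^ k + a')%N /\ (n %| b * q ^ k + b')%N.

Lemma Tr0 : Tr 0 = 0.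
Proof.
rewrite /Tr big1 // => k _; rewrite expr0n expn_eq0 eqn0Ngt.
by rewrite (ltn_trans _ q_gt1).
Qed.

Lemma alg_eq0 (c : F) : ((c%:A : L) == 0) = (c == 0).
Proof. by rewrite scaler_eq0 oner_eq0 orbF. Qed.

Lemma dual_iff d : dual_containing n (hyp_code n q d alpha) <-> ~ Bad d.
Proof.
split.
- move=> Hdc [a [b [a' [b' [k [km [Zab [Za'b' [Ha Hb]]]]]]]]].
  pose K := fun k => (n %| a * q ^ k + a')%N && (n %| b * q ^ k + b')%N.
  have [t [tn Ht]] := @nondeg K k 1 km (introT andP (conj Ha Hb)) (oner_neq0 _).
  set u := trmat t a b.
  have Hu : euclid_dual n (hyp_code n q d alpha) u.
    move=> v Hv; apply/eqP; rewrite -alg_eq0.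
    have := inner_trmat v t a b; rewrite (Hv a b Zab) mulr0 Tr0 => H.
    have E : \sum_i \sum_j u i j * v i j = \sum_i \sum_j v i j * u i j.
      by apply: eq_bigr => i _; apply: eq_bigr => j _; rewrite mulrC.
    by rewrite E H.
  have := Hdc u Hu a' b' Za'b'; rewrite eval_trmat => H.
  by move: Ht; under eq_bigr do rewrite mulr1; rewrite H eqxx.
- move=> nB u Hu a b Zab.
  apply/eqP; apply/negPn/negP => w0.
  have [t [tn Ht]] := @nondeg xpredT 0 _ (ltn_trans (ltnSn 0) m_gt1) isT w0.
  have Hv : hyp_code n q d alpha (trmat t a b).
    move=> a' b' Za'b'; rewrite eval_trmat big_pred0 // => k.
    apply/negP => /andP [Ha Hb]; apply: nB.
    by exists a, b, a', b', k; split.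
  have := Hu _ Hv => /(congr1 (fun c : F => (c%:A : L))).
  rewrite inner_trmat scale0r => H.
  by move: Ht; rewrite -/(Tr _) H eqxx.
Qed.

End Alg.


Theorem theorem3 (F : finFieldType) (L : fieldExtType F) (q m n d : nat)
  (alpha : L) :
  #|F| = q -> (3 < m)%N -> n = (q ^ m - 1)%N -> \dim {:L} = m ->
  n.-primitive_root alpha -> (2 <= d)%N ->
  (dual_containing n (hyp_code n q d alpha) <-> (d <= hyp_delta q m)%N).
Proof.
move=> Fq m3 Hn dimL prim d2.
have m1 : (1 < m)%N by apply: ltn_trans m3.
have q2 : (2 <= q)%N by rewrite -Fq; exact: finNzRing_gt1.
have Hn' : n = (#|F| ^ m - 1)%N by rewrite Fq.
have DI := dual_iff dimL Hn' prim m1 d.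
rewrite Fq in DI; rewrite DI.
change (~ BadN #|F| m n d <-> (d <= hyp_delta q m)%N).
rewrite Fq.
split.
- move=> nB; rewrite leqNgt; apply/negP => H; apply: nB; exact: NT_upper.
- move=> H HB; have := NT_lower q2 m3 Hn HB; rewrite ltnNge H //.
Qed.
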